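(* Let $h\in\mathcal H$ and $\varphi(\underline{x})=h(x_0,x_1)$ on $X=[0,1]^{\mathbb N_0}$. Let $a,b\in\mathrm{m}_h$ be such that $a$ and $b$ do not belong to the same connected component of $\mathrm{m}_h$. Then $H_\varphi(a^\infty,b^\infty)+H_\varphi(b^\infty,a^\infty)\neq0$, i.e. $a^\infty\not\sim_\varphi b^\infty$.
   Context: $X=[0,1]^{\mathbb N_0}$ with metric $d_X(\underline{x},\underline{y})=\sum_{i\ge0}|x_i-y_i|/2^{i+1}$ and shift $\sigma(\underline{x})_i=x_{i+1}$. $\alpha_\varphi=\inf_\mu\int\varphi\,d\mu$ over $\sigma$-invariant Borel probability measures. $B(\underline{x},\underline{y},n;\varepsilon)=\{\underline{z}: d_X(\underline{x},\underline{z})<\varepsilon,\ d_X(\sigma^n\underline{z},\underline{y})<\varepsilon\}$; Peierls barrier $H_\varphi(\underline{x},\underline{y})=\lim_{\varepsilon\to0}\liminf_{n\to\infty}\inf\{\sum_{i=0}^{n-1}(\varphi(\sigma^i\underline{z})-\alpha_\varphi): \underline{z}\in B(\underline{x},\underline{y},n;\varepsilon)\}\in\mathbb R\cup\{+\infty\}$. For points of the Aubry set, $\underline{x}\sim_\varphi\underline{y}$ means $H_\varphi(\underline{x},\underline{y})+H_\varphi(\underline{y},\underline{x})=0$. $h^*=\min_x h(x,x)$, $\mathrm{m}_h=\{a: h(a,a)=h^*\}$, $a^\infty=aaa\ldots$. A finite sequence $(x_k,\dots,x_l)$ is minimal (for $h$) if $\sum_{i=k}^{l-1}h(x_i,x_{i+1})\le\sum_{i=k}^{l-1}h(y_i,y_{i+1})$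 for every $(y_k,\dots,y_l)$ in $[0,1]$ with the same endpoints. $\mathcal H$ is the set of Lipschitz $h:[0,1]^2\to\mathbb R$ such that (H3) if $\xi_1<\xi_2$, $\eta_1<\eta_2$ then $h(\xi_1,\eta_1)+h(\xi_2,\eta_2)<h(\xi_1,\eta_2)+h(\xi_2,\eta_1)$; and (H4) if $(x_{-1},x_0,x_1)\ne(x'_{-1},x_0,x'_1)$ are both minimal then $(x_{-1}-x'_{-1})(x_1-x'_1)<0$. *)

(* Defs.v *)
From HB Require Import structures.
From mathcomp Require Import all_boot all_order all_algebra.
From mathcomp Require Import all_classical all_reals all_analysis.
Set Implicit Arguments. Unset Strict Implicit. Unset Printing Implicit Defensive.
Import Order.TTheory GRing.Theory Num.Theory.
Import numFieldNormedType.Exports.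
Local Open Scope classical_set_scope.
Local Open Scope ring_scope.

Section Defs.
Variable R : realType.

Definition X := {x : nat -> R | forall i, 0 <= x i <= 1}.

Lemma zero_in01 : forall i : nat, 0 <= (fun _ : nat => (0:R)) i <= 1.
Proof. by move=> i; rewrite lexx ler01. Qed.

HB.instance Definition _ := gen_eqMixin X.
HB.instance Definition _ := gen_choiceMixin X.
HB.instance Definition _ := isPointed.Build X (exist _ (fun _ => 0) zero_in01).

Definition xcoord (x : X) (i : nat) : R := proj1_sig x i.

Definition dX (x y : X) : R :=
  limn (series (fun i : nat => `|xcoord x i - xcoord y i| / 2 ^+ i.+1)).

Lemma shift_in01 (x : X) : forall i, 0 <= xcoord x i.+1 <= 1.
Proof. by move=> i; exact: (proj2_sig x i.+1). Qed.

Definition shift (x : X) : X := exist _ (fun i => xcoord x i.+1) (shift_in01 x).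

Definition dX_open (A : set X) : Prop :=
  forall x, A x -> exists2 e : R, 0 < e & forall z, dX x z < e -> A z.

Definition XB := g_sigma_algebraType dX_open.

Definition invariant (mu : probability XB R) : Prop :=
  forall A : set XB, measurable A -> mu (@shift @^-1` A) = mu A.

(* alpha_phi = inf_mu \int phi dmu (finite for continuous phi on compact X) *)
Definition alpha (phi : X -> R) : R :=
  fine (ereal_inf [set (\int[mu]_(x in [set: XB]) (phi x)%:E)%E
                  | mu in [set mu : probability XB R | invariant mu]]).

Definition Bset (x y : X) (n : nat) (eps : R) : set X :=
  [set z | dX x z < eps /\ dX (iter n shift z) y < eps].

Definition Binf (phi : X -> R) (x y : X) (eps : R) (n : nat) : \bar R :=
  ereal_inf [set (\sum_(0 <= i < n) (phi (iter i shift z) - alpha phi))%:E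
            | z in Bset x y n eps].

Definition peierls (phi : X -> R) (x y : X) : \bar R :=
  lim ((fun eps : R => limn_einf (Binf phi x y eps)) @ 0^'+).

Definition phi_of (h : R -> R -> R) (x : X) : R := h (xcoord x 0) (xcoord x 1).

Definition in01 (t : R) : Prop := 0 <= t <= 1.

Definition lipschitz01 (h : R -> R -> R) : Prop :=
  exists L : R, forall x1 y1 x2 y2, in01 x1 -> in01 y1 -> in01 x2 -> in01 y2 ->
    `|h x1 y1 - h x2 y2| <= L * (`|x1 - x2| + `|y1 - y2|).

Definition H3 (h : R -> R -> R) : Prop :=
  forall xi1 xi2 eta1 eta2, in01 xi1 -> in01 xi2 -> in01 eta1 -> in01 eta2 ->
    xi1 < xi2 -> eta1 < eta2 ->
    h xi1 eta1 + h xi2 eta2 < h xi1 eta2 + h xi2 eta1.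

Definition minimal (h : R -> R -> R) (k l : nat) (x : nat -> R) : Prop :=
  (forall i, (k <= i <= l)%N -> in01 (x i)) /\
  forall y : nat -> R, (forall i, (k <= i <= l)%N -> in01 (y i)) ->
    y k = x k -> y l = x l ->
    \sum_(k <= i < l) h (x i) (x i.+1) <= \sum_(k <= i < l) h (y i) (y i.+1).

(* (H4), triples (x_{-1},x_0,x_1) written as (u,v,w) *)
Definition H4 (h : R -> R -> R) : Prop :=
  forall u v w u' w' : R,
    minimal h 0 2 (fun i => nth 0 [:: u; v; w] i) ->
    minimal h 0 2 (fun i => nth 0 [:: u'; v; w'] i) ->
    (u, w) <> (u', w') -> (u - u') * (w - w') < 0.

Definition classH (h : R -> R -> R) : Prop := lipschitz01 h /\ H3 h /\ H4 h.

Definition m_h (h : R -> R -> R) : set R :=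
  [set a | in01 a /\ forall t, in01 t -> h a a <= h t t].

End Defs.

(* Main.v *)
Require Import Defs.
From HB Require Import structures.
From mathcomp Require Import all_boot all_order all_algebra.
From mathcomp Require Import all_classical all_reals all_analysis.
From mathcomp Require Import measurable_realfun.
From mathcomp.algebra_tactics Require Import ring lra.
Import Order.TTheory GRing.Theory Num.Theory.
Import numFieldNormedType.Exports.
Local Open Scope classical_set_scope.
Local Open Scope ring_scope.

Section Comb.
Variable R : realType.
Variable h : R -> R -> R.
Hypothesis hH3 : H3 h.

Definition i01 (t : R) : bool := (0 <= t) && (t <= 1).

Lemma monge_le x1 x2 y1 y2 : i01 x1 -> i01 x2 -> i01 y1 -> i01 y2 ->
  x1 <= x2 -> y1 <= y2 -> h x1 y1 + h x2 y2 <= h x1 y2 + h x2 y1.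
Proof.
move=> a1 a2 b1 b2; rewrite le_eqVlt => /orP[/eqP->|lx].
  by move=> _; rewrite addrC.
rewrite le_eqVlt => /orP[/eqP->|ly]; first by rewrite addrC.
by apply: ltW; apply: hH3.
Qed.

Definition Dm x1 x2 y1 y2 := h x1 y2 + h x2 y1 - h x1 y1 - h x2 y2.

Lemma Dm_ge0 x1 x2 y1 y2 : i01 x1 -> i01 x2 -> i01 y1 -> i01 y2 ->
  x1 <= x2 -> y1 <= y2 -> 0 <= Dm x1 x2 y1 y2.
Proof. move=> a b c d e f; have := @monge_le x1 x2 y1 y2 a b c d e f; rewrite /Dm; lra. Qed.

Lemma Dm_gain c1 c2 x1 x2 y1 y2 : i01 c1 -> i01 c2 ->
  i01 x1 -> i01 x2 -> i01 y1 -> i01 y2 ->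
  x1 <= c1 -> c1 <= c2 -> c2 <= x2 -> y1 <= c1 -> c2 <= y2 ->
  Dm c1 c2 c1 c2 <= Dm x1 x2 y1 y2.
Proof.
move=> c1i c2i x1i x2i y1i y2i xc1 c12 c2x yc1 c2y.
have e1 : Dm x1 x2 y1 y2 = Dm x1 c1 y1 y2 + Dm c1 c2 y1 y2 + Dm c2 x2 y1 y2.
  by rewrite /Dm; ring.
have e2 : Dm c1 c2 y1 y2 = Dm c1 c2 y1 c1 + Dm c1 c2 c1 c2 + Dm c1 c2 c2 y2.
  by rewrite /Dm; ring.
have := @Dm_ge0 _ _ _ _ x1i c1i y1i y2i xc1 (le_trans yc1 (le_trans c12 c2y)).
have := @Dm_ge0 _ _ _ _ c2i x2i y1i y2i c2x (le_trans yc1 (le_trans c12 c2y)).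
have := @Dm_ge0 _ _ _ _ c1i c2i y1i c1i c12 yc1.
have := @Dm_ge0 _ _ _ _ c1i c2i c2i y2i c12 c2y.
lra.
Qed.

Fixpoint pc (l : seq R) : R :=
  if l is x :: l' then (if l' is y :: _ then h x y + pc l' else 0) else 0.

Definition cyc (l : seq R) : R := if l is x :: _ then pc (rcons l x) else 0.

Definition dg (l : seq R) : R := \sum_(t <- l) h t t.

Lemma pc_cons2 x y l : pc (x :: y :: l) = h x y + pc (y :: l).
Proof. by []. Qed.

Lemma pc_cat l1 x l2 : pc (l1 ++ x :: l2) = pc (rcons l1 x) + pc (x :: l2).
Proof.
elim: l1 => [|y l1 IH]; first by rewrite /= add0r.
case: l1 IH => [|y' l1] IH.
  change (pc (y :: x :: l2) = pc [:: y; x] + pc (x :: l2)).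
  by rewrite pc_cons2 (pc_cons2 y x [::]) addr0.
change (pc (y :: y' :: (l1 ++ x :: l2)) = pc (y :: y' :: rcons l1 x) + pc (x :: l2)).
rewrite !pc_cons2 -addrA; congr (_ + _); exact: IH.
Qed.

Lemma pc_rcons y s z : pc (rcons (y :: s) z) = pc (y :: s) + h (last y s) z.
Proof.
elim: s y => [|y' s IH] y; first by rewrite /= add0r addr0.
change (pc (y :: y' :: rcons s z) = pc (y :: y' :: s) + h (last y' s) z).
by rewrite !pc_cons2 IH addrA.
Qed.

Lemma cyc_rot1 x s : cyc (rcons s x) = cyc (x :: s).
Proof.
case: s => [|y s] //.
change (pc (rcons (y :: rcons s x) y) = pc (x :: y :: rcons s x)).
by rewrite pc_rcons last_rcons pc_cons2 addrC.
Qed.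

Lemma cyc_rot s1 M s2 : cyc (s1 ++ M :: s2) = cyc (M :: s2 ++ s1).
Proof.
elim: s1 s2 => [|y s1 IH] s2; first by rewrite cats0.
rewrite cat_cons -cyc_rot1 rcons_cat rcons_cons IH.
by rewrite -cats1 -catA.
Qed.

Lemma cyc_cons M y s : cyc (M :: y :: s) =
  h M y + h (last y s) M - h (last y s) y + cyc (y :: s).
Proof.
have -> : cyc (y :: s) = pc (rcons (y :: s) y) by [].
change (pc (rcons (M :: y :: s) M) = h M y + h (last y s) M - h (last y s) y + pc (rcons (y :: s) y)).
rewrite !pc_rcons pc_cons2 /=.
ring.
Qed.

Lemma exists_max (l : seq R) : l != [::] -> exists2 M, M \in l & forall t, t \in l -> t <= M.
Proof.
elim: l => [|x l IH] //= _.
case: l IH => [|y l] IH.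
  by exists x; rewrite ?mem_seq1 // => t; rewrite mem_seq1 => /eqP->.
have [M Ml HM] := IH isT.
have [xM|Mx] := leP x M.
  exists M; first by rewrite in_cons Ml orbT.
  by move=> t; rewrite in_cons => /orP[/eqP->//|]; exact: HM.
exists x; first by rewrite mem_head.
move=> t; rewrite in_cons => /orP[/eqP->//|/HM tM]; exact: le_trans tM (ltW Mx).
Qed.

Lemma rot_max (l : seq R) : l != [::] -> exists M s,
  [/\ perm_eq l (M :: s), cyc l = cyc (M :: s) & forall t, t \in l -> t <= M].
Proof.
move=> /exists_max[M Ml HM].
case/splitPr: Ml HM => s1 s2 HM.
exists M, (s2 ++ s1); split => //; last by rewrite cyc_rot.
by rewrite -cat_cons perm_catC.
Qed.

Lemma dg_cons x s : dg (x :: s) = h x x + dg s.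
Proof. by rewrite /dg big_cons. Qed.

Lemma cyc_ge n (l : seq R) : (size l <= n)%N -> all i01 l -> dg l <= cyc l.
Proof.
elim: n l => [|n IH] l.
  by rewrite leqn0 => /nilP->; rewrite /dg big_nil.
case: (eqVneq l [::]) => [->|ln0]; first by rewrite /dg big_nil.
move=> sl al.
have [M [s [pl cl HM]]] := @rot_max _ ln0.
rewrite cl /dg (perm_big _ pl) -/(dg (M :: s)) dg_cons.
have al' : all i01 (M :: s) by rewrite -(perm_all _ pl).
have sl' : (size s <= n)%N by move: sl; rewrite (perm_size pl).
have HM' : forall t, t \in M :: s -> t <= M by move=> t; rewrite -(perm_mem pl); exact: HM.
clear cl; case: s pl al' sl' HM' => [|y s] pl al' sl' HM'.
  by rewrite /dg big_nil /= addr0.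
rewrite cyc_cons.
move: al' => /andP[Mi /andP[yi /allP sa]].
have ays : all i01 (y :: s) by rewrite /= yi; apply/allP.
have IHs := IH (y :: s) sl' ays.
have pin : last y s \in y :: s by apply: mem_last.
have pi : i01 (last y s) by move/allP: ays; apply.
have pM : last y s <= M by apply: HM'; rewrite in_cons pin orbT.
have yM : y <= M by apply: HM'; rewrite in_cons mem_head orbT.
have := @monge_le (last y s) M y M pi Mi yi Mi pM yM.
lra.
Qed.

Lemma cyc_gain c1 c2 n l : i01 c1 -> i01 c2 -> c1 < c2 ->
  (size l <= n)%N -> all i01 l -> has (fun t => t <= c1) l ->
  has (fun t => c2 <= t) l -> all (fun t => (t <= c1) || (c2 <= t)) l ->
  dg l + Dm c1 c2 c1 c2 <= cyc l.
Proof.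
move=> c1i c2i c12.
elim: n l => [|n IH] l.
  by rewrite leqn0 => /nilP->.
case: (eqVneq l [::]) => [->//|ln0].
move=> sl al hl hh ao.
have [M [s [pl cl HM]]] := @rot_max _ ln0.
have [t tl c2t] := hasP hh.
have c2M : c2 <= M := le_trans c2t (HM t tl).
rewrite cl /dg (perm_big _ pl) -/(dg (M :: s)) dg_cons.
have al' : all i01 (M :: s) by rewrite -(perm_all _ pl).
have ao' : all (fun t => (t <= c1) || (c2 <= t)) (M :: s) by rewrite -(perm_all _ pl).
have hl' : has (fun t => t <= c1) (M :: s) by rewrite -(perm_has _ pl).
have sl' : (size s <= n)%N by move: sl; rewrite (perm_size pl).
have HM' : forall t, t \in M :: s -> t <= M by move=> t'; rewrite -(perm_mem pl); exact: HM.
have nMc1 : ~~ (M <= c1) by rewrite -ltNge (lt_le_trans c12 c2M).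
clear cl; case: s pl al' sl' HM' ao' hl' => [|y s] pl al' sl' HM' ao' hl'.
  by move: hl'; rewrite /= (negbTE nMc1).
rewrite cyc_cons.
move: al' => /andP[Mi /andP[yi /allP sa]].
have ays : all i01 (y :: s) by rewrite /= yi; apply/allP.
have pin : last y s \in y :: s by apply: mem_last.
have pi : i01 (last y s) by move/allP: ays; apply.
have pM : last y s <= M by apply: HM'; rewrite in_cons pin orbT.
have yM : y <= M by apply: HM'; rewrite in_cons mem_head orbT.
have hl2 : has (fun t => t <= c1) (y :: s).
  by move: hl'; rewrite [has _ (M :: _)]/= (negbTE nMc1).
have ao2 : all (fun t => (t <= c1) || (c2 <= t)) (y :: s) by move: ao' => /andP[].
case: (boolP (has (fun t => c2 <= t) (y :: s))) => hh2.
  have IHs := IH (y :: s) sl' ays hl2 hh2 ao2.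
  have := @monge_le (last y s) M y M pi Mi yi Mi pM yM.
  lra.
have low : forall t, t \in y :: s -> t <= c1.
  move=> t' t's; move/allP: ao2 => /(_ t' t's) /orP[//|c2t'].
  by move/hasPn: hh2 => /(_ t' t's); rewrite c2t'.
have := @Dm_gain c1 c2 (last y s) M y M c1i c2i pi Mi yi Mi (low _ pin) (ltW c12) c2M
  (low _ (mem_head _ _)) c2M.
have := @cyc_ge (size (y :: s)) (y :: s) (leqnn _) ays.
rewrite /Dm; lra.
Qed.

Lemma dg_ge hs (l : seq R) : (forall t, t \in l -> hs <= h t t) ->
  (size l)%:R * hs <= dg l.
Proof.
elim: l => [|x l IH] H; first by rewrite /dg big_nil mul0r.
rewrite dg_cons /= -add1n natrD mulrDl mul1r lerD //.
  by apply: H; rewrite mem_head.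
by apply: IH => t tl; apply: H; rewrite in_cons tl orbT.
Qed.

Lemma dg_ge_gain hs g0 (P : pred R) (l : seq R) : (forall t, t \in l -> hs <= h t t) ->
  (forall t, t \in l -> P t -> hs + g0 <= h t t) -> has P l ->
  (size l)%:R * hs + g0 <= dg l.
Proof.
elim: l => [|x l IH] H HP //=.
rewrite dg_cons -add1n natrD mulrDl mul1r.
have Hl : forall t, t \in l -> hs <= h t t by move=> t tl; apply: H; rewrite in_cons tl orbT.
have HPl : forall t, t \in l -> P t -> hs + g0 <= h t t.
  by move=> t tl; apply: HP; rewrite in_cons tl orbT.
case/orP => [Px|hl].
  have := HP x (mem_head _ _) Px.
  have := @dg_ge hs l Hl.
  lra.
have := IH Hl HPl hl.
have := H x (mem_head _ _).
lra.
Qed.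

Lemma cyc_pos c1 c2 hs g0 d (l : seq R) : i01 c1 -> i01 c2 -> c1 < c2 ->
  all i01 l -> has (fun t => t <= c1) l -> has (fun t => c2 <= t) l ->
  (forall t, t \in l -> hs <= h t t) ->
  (forall t, t \in l -> c1 < t < c2 -> hs + g0 <= h t t) ->
  d <= g0 -> d <= Dm c1 c2 c1 c2 ->
  (size l)%:R * hs + d <= cyc l.
Proof.
move=> c1i c2i c12 al hl hh Hs Hg dg0 dD.
case: (boolP (has (fun t => c1 < t < c2) l)) => hm.
  have := @dg_ge_gain hs g0 _ l Hs Hg hm.
  have := @cyc_ge (size l) l (leqnn _) al.
  lra.
have ao : all (fun t => (t <= c1) || (c2 <= t)) l.
  apply/allP => t tl; move/hasPn: hm => /(_ t tl).
  by rewrite negb_and -!leNgt orbC.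
have := @cyc_gain c1 c2 (size l) l c1i c2i c12 (leqnn _) al hl hh ao.
have := @dg_ge hs l Hs.
lra.
Qed.

Lemma pc_iota_rcons (f : nat -> R) k n X :
  pc (rcons (map f (iota k n.+1)) X) =
  \sum_(k <= i < k + n) h (f i) (f i.+1) + h (f (k + n)%N) X.
Proof.
elim: n k => [|n IH] k.
  rewrite !addn0 big_geq // add0r /= addr0; congr (h (f _) X); by rewrite addn0.
change (pc (f k :: rcons (map f (iota k.+1 n.+1)) X) =
  \sum_(k <= i < k + n.+1) h (f i) (f i.+1) + h (f (k + n.+1)%N) X).
have -> : rcons (map f (iota k.+1 n.+1)) X = f k.+1 :: rcons (map f (iota k.+2 n)) X by [].
rewrite pc_cons2.
have -> : f k.+1 :: rcons (map f (iota k.+2 n)) X = rcons (map f (iota k.+1 n.+1)) X by [].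
rewrite IH -addSnnS [in RHS]big_ltn; last by rewrite ltnS leq_addr.
by rewrite addrA.
Qed.

Lemma two_paths (zc wc : nat -> R) n m hs g0 d c1 c2 :
  i01 c1 -> i01 c2 -> c1 < c2 ->
  (forall i, i01 (zc i)) -> (forall i, i01 (wc i)) ->
  zc 0%N <= c1 -> c2 <= wc 0%N ->
  (forall t, i01 t -> hs <= h t t) ->
  (forall t, i01 t -> c1 < t < c2 -> hs + g0 <= h t t) ->
  d <= g0 -> d <= Dm c1 c2 c1 c2 ->
  n.+1%:R * hs + m.+1%:R * hs + d <=
  (\sum_(0 <= i < n) h (zc i) (zc i.+1) + h (zc n) (wc 0%N)) +
  (\sum_(0 <= i < m) h (wc i) (wc i.+1) + h (wc m) (zc 0%N)).
Proof.
move=> c1i c2i c12 zi wi z0 w0 Hs Hg dg0 dD.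
set l := map zc (iota 0 n.+1) ++ map wc (iota 0 m.+1).
have inl : forall t, t \in l -> i01 t.
  by move=> t; rewrite mem_cat => /orP[] /mapP[i _ ->].
have al : all i01 l by apply/allP.
have hl : has (fun t => t <= c1) l.
  by apply/hasP; exists (zc 0%N) => //; rewrite mem_cat; apply/orP; left; apply/mapP; exists 0%N.
have hh : has (fun t => c2 <= t) l.
  by apply/hasP; exists (wc 0%N) => //; rewrite mem_cat; apply/orP; right; apply/mapP; exists 0%N.
have := @cyc_pos c1 c2 hs g0 d l c1i c2i c12 al hl hh
  (fun t tl => Hs t (inl t tl)) (fun t tl => Hg t (inl t tl)) dg0 dD.
have -> : cyc l = pc (rcons l (zc 0%N)) by [].
have -> : rcons l (zc 0%N) = map zc (iota 0 n.+1) ++ wc 0%N :: rcons (map wc (iota 1 m)) (zc 0%N).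
  by rewrite /l rcons_cat.
rewrite pc_cat.
have -> : wc 0%N :: rcons (map wc (iota 1 m)) (zc 0%N) = rcons (map wc (iota 0 m.+1)) (zc 0%N) by [].
rewrite !pc_iota_rcons !add0n.
by rewrite /l size_cat !size_map !size_iota natrD mulrDl.
Qed.

End Comb.
Arguments i01 {R}.
Arguments Dm {R}.


Section Ana.
Variable R : realType.

Lemma xcoord_shift (z : X R) i : xcoord (Defs.shift z) i = xcoord z i.+1.
Proof. by []. Qed.

Lemma xcoord_iter n (z : X R) i : xcoord (iter n (@Defs.shift R) z) i = xcoord z (i + n)%N.
Proof.
elim: n i => [|n IH] i; first by rewrite addn0.
by rewrite iterS xcoord_shift IH addSnnS.
Qed.

Lemma xcoord_i01 (z : X R) i : i01 (xcoord z i).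
Proof. exact: (proj2_sig z i). Qed.

Lemma X_ext (x y : X R) : (forall i, xcoord x i = xcoord y i) -> x = y.
Proof.
case: x => f pf; case: y => g pg /= H.
have E : f = g by apply: funext.
subst g; by rewrite (Prop_irrelevance pf pg).
Qed.

Lemma dX_ge (x y : X R) i : `|xcoord x i - xcoord y i| / 2 ^+ i.+1 <= dX x y.
Proof.
rewrite /dX.
set f := fun k : nat => `|xcoord x k - xcoord y k| / 2 ^+ k.+1.
have f0 : forall k, 0 <= f k by move=> k; rewrite /f divr_ge0 // exprn_ge0.
have fle : forall k, f k <= (2 ^+ k)^-1 / 2.
  move=> k; rewrite /f exprS invfM.
  have t0 : 0 < (2 ^+ k : R)^-1 by rewrite invr_gt0 exprn_gt0.
  have := xcoord_i01 x k; have := xcoord_i01 y k.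
  rewrite /i01 => /andP[y0 y1] /andP[x0 x1].
  have : `|xcoord x k - xcoord y k| <= 1 by rewrite ler_norml; apply/andP; split; lra.
  have := normr_ge0 (xcoord x k - xcoord y k).
  nra.
have nd : nondecreasing_seq (series f).
  apply/nondecreasing_seqP => n; rewrite /series /= big_nat_recr //= lerDl; exact: f0.
have ub : forall n, series f n <= 1 - (2 ^+ n)^-1.
  elim=> [|n IH]; first by rewrite /series /= big_geq // expr0 invr1 subrr.
  rewrite /series /= big_nat_recr //=.
  have := fle n; move: IH; rewrite /series /= exprS invfM.
  lra.
have cv : cvgn (series f).
  apply: nondecreasing_is_cvgn => //; exists 1 => _ [n _ <-].
  have := ub n; have : 0 < (2 ^+ n : R)^-1 by rewrite invr_gt0 exprn_gt0.
  lra.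
apply: le_trans (nondecreasing_cvgn_le nd cv i.+1).
rewrite /series /= big_nat_recr //= lerDr.
by apply: sumr_ge0 => k _; exact: f0.
Qed.

Lemma dX_coord0 (x y : X R) : `|xcoord x 0 - xcoord y 0| <= 2 * dX x y.
Proof. have := dX_ge x y 0; rewrite expr1; lra. Qed.

Lemma dX_coord1 (x y : X R) : `|xcoord x 1 - xcoord y 1| <= 4 * dX x y.
Proof.
have := dX_ge x y 1; rewrite (_ : 2 ^+ 2 = 4 :> R); first lra.
by rewrite expr2; lra.
Qed.

Lemma phi_bound h : lipschitz01 h -> exists K : R, 0 <= K /\ forall x : X R, `|phi_of h x| <= K.
Proof.
case=> L HL; exists (`|h 0 0| + 2 * `|L|); split.
  by apply: addr_ge0 => //; apply: mulr_ge0.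
move=> x; rewrite /phi_of.
have i0 : in01 (0 : R) by rewrite /in01 lexx ler01.
have := HL _ _ _ _ (xcoord_i01 x 0) (xcoord_i01 x 1) i0 i0.
have := xcoord_i01 x 0; have := xcoord_i01 x 1.
rewrite /i01 !subr0 => /andP[a0 a1] /andP[b0 b1].
rewrite (ger0_norm a0) (ger0_norm b0) => H.
have : L * (xcoord x 0 + xcoord x 1) <= `|L| * 2.
  apply: le_trans (ler_norm _) _; rewrite normrM ler_wpM2l //.
  by rewrite ger0_norm; [lra|lra].
have := ler_normB (h (xcoord x 0) (xcoord x 1)) (h 0 0).
have := ler_distlC. 
move=> _ H1 H2.
have : `|h (xcoord x 0) (xcoord x 1)| <= `|h (xcoord x 0) (xcoord x 1) - h 0 0| + `|h 0 0|.
  by rewrite -{1}(subrK (h 0 0) (h (xcoord x 0) (xcoord x 1))) ler_normD.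
lra.
Qed.

Lemma phi_cont h : lipschitz01 h -> exists L : R, 0 < L /\
  forall x z : X R, `|phi_of h x - phi_of h z| <= L * dX x z.
Proof.
case=> L HL; exists (6 * (`|L| + 1)); split; first by rewrite mulr_gt0 // ltr_pwDr.
move=> x z; rewrite /phi_of.
have := HL _ _ _ _ (xcoord_i01 x 0) (xcoord_i01 x 1) (xcoord_i01 z 0) (xcoord_i01 z 1).
have := dX_coord0 x z; have := dX_coord1 x z.
set s0 := `|_ - _|; set s1 := `|_ - _|.
have s00 : 0 <= s0 by apply: normr_ge0.
have s10 : 0 <= s1 by apply: normr_ge0.
move=> H1 H0 H.
have : L * (s0 + s1) <= (`|L| + 1) * (s0 + s1).
  by apply: ler_wpM2r; [lra|]; apply: le_trans (ler_norm _) _; lra.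
have := normr_ge0 L.
nra.
Qed.

Lemma phi_meas h : lipschitz01 h ->
  measurable_fun [set: XB R] (fun x : XB R => phi_of h x).
Proof.
move=> /phi_cont [L [L0 HL]].
apply: (measurability _ (measurable_realfun.RGenOInfty.measurableE R)) => //.
move=> _ [_ [r ->] <-].
rewrite setTI; apply: sub_sigma_algebra.
move=> x /=; rewrite in_itv /= andbT => rx.
exists ((phi_of h x - r) / L); first by rewrite divr_gt0 // subr_gt0.
move=> z dz; rewrite /= in_itv /= andbT.
move: dz; rewrite ltr_pdivlMr // => dz.
have := HL x z; rewrite ler_norml => /andP[_ H].
have := dX_ge x z 0; have := normr_ge0 (xcoord x 0 - xcoord z 0).
nra.
Qed.

Lemma int_lb h : lipschitz01 h ->
  exists K : R, forall mu : probability (XB R) R,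
  ((- K)%:E <= \int[mu]_(x in [set: XB R]) (phi_of h x)%:E)%E.
Proof.
move=> hL; have [K [K0 HK]] := @phi_bound h hL; exists K => nu.
have mf : measurable_fun [set: XB R] (fun x : XB R => (phi_of h x)%:E).
  by apply/measurable_EFinP; exact: (@phi_meas h hL).
have H1 := @le_abse_integral _ _ _ nu _ _ measurableT mf.
have H2 : (\int[nu]_(x in [set: XB R]) `|(phi_of h x)%:E| <=
           \int[nu]_(x in [set: XB R]) (cst K%:E) x)%E.
  apply: ge0_le_integral => //.
  - by apply: measurableT_comp => //.
  - by move=> x _; rewrite /= lee_fin.
rewrite integral_cst // in H2.
move: H2; set t := (X in (_ <= K%:E * X)%E) => H2.
have t1 : t = 1%E by rewrite /t; exact: probability_setT.
rewrite t1 mule1 in H2.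
have H3 := le_trans H1 H2.
rewrite EFinN leeNl; apply: le_trans (lee_abs _) _; rewrite abseN; exact: H3.
Qed.

Lemma alpha_le h a (ainf : X R) : lipschitz01 h -> m_h h a ->
  (forall i, xcoord ainf i = a) -> alpha (phi_of h) <= h a a.
Proof.
move=> hL [ai am] Ha.
rewrite /alpha.
set S := [set _ | _ in _].
have [K HK] := @int_lb h hL.
have lb : ((- K)%:E <= ereal_inf S)%E.
  by apply: le_ereal_inf_tmp => _ [mu _ <-]; exact: HK.
have fixa : Defs.shift ainf = ainf by apply: X_ext => i; rewrite xcoord_shift !Ha.
pose mu : probability (XB R) R := @dirac _ (XB R) ainf R.
have inv : Defs.invariant mu.
  move=> A mA; rewrite /mu /=; change ((@dirac _ (XB R) ainf R) (@Defs.shift R @^-1` A) = (@dirac _ (XB R) ainf R) A); rewrite !diracE; congr (_%:R%:E).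
  by rewrite -{2}fixa.
have mf : measurable_fun [set: XB R] (fun x : XB R => (phi_of h x)%:E).
  by apply/measurable_EFinP; exact: (@phi_meas h hL).
have ub : (ereal_inf S <= (h a a)%:E)%E.
  apply: ereal_inf_lbound; exists mu => //.
  rewrite /mu integral_dirac // diracE in_setT mul1e /phi_of !Ha //.
have fin : ereal_inf S \is a fin_num.
  rewrite fin_numElt; apply/andP; split.
    exact: lt_le_trans (ltNyr _) lb.
  exact: le_lt_trans ub (ltry _).
by rewrite -lee_fin fineK.
Qed.

Lemma Binf_mono (phi : X R -> R) x y e1 e2 n : e1 <= e2 ->
  (Binf phi x y e2 n <= Binf phi x y e1 n)%E.
Proof.
move=> e12; apply: ereal_inf_le_tmp => _ [z [d1 d2] <-]; exists z => //.
by split; apply: lt_le_trans e12.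
Qed.

Lemma le_limn_einf (u v : (\bar R)^nat) : (forall n, (u n <= v n)%E) ->
  (limn_einf u <= limn_einf v)%E.
Proof.
move=> uv; rewrite !limn_einf_lim; apply: lee_lim; [exact: is_cvg_einfs|exact: is_cvg_einfs|].
apply: nearW => n; rewrite /einfs /=.
apply: le_ereal_inf_tmp => _ [k kn <-].
apply: le_trans (uv k); apply: ereal_inf_lbound; by exists k.
Qed.

Lemma limn_einf_lt (u : (\bar R)^nat) t : (limn_einf u < t)%E -> exists n, (u n < t)%E.
Proof.
move=> H.
have : (einfs u 0%N <= limn_einf u)%E.
  rewrite limn_einf_lim; apply: lime_ge; first exact: is_cvg_einfs.
  by apply: nearW => n; apply: nondecreasing_einfs.
move=> /le_lt_trans /(_ H); rewrite /einfs /= => /ereal_inf_lt[_ [k _ <-]] ukt.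
by exists k.
Qed.

Lemma peierls_ge (phi : X R -> R) x y e : 0 < e ->
  (limn_einf (Binf phi x y e) <= peierls phi x y)%E.
Proof.
move=> e0; rewrite /peierls.
set P := fun eps : R => limn_einf (Binf phi x y eps).
have ni : {in Interval (BRight 0) (BInfty R false) &, nonincreasing_fun P}.
  move=> s t _ _ st; apply: le_limn_einf => n; exact: Binf_mono.
have cv := @nonincreasing_at_right_cvge R P 0 (BInfty R false) isT ni.
apply: lime_ge; first exact: cvgP cv.
near=> t.
apply: le_limn_einf => n; apply: Binf_mono.
near: t; exact: nbhs_right_le.
Unshelve. all: by end_near.
Qed.

End Ana.
Arguments dX_coord0 {R}.
Arguments dX_coord1 {R}.
Arguments xcoord_i01 {R}.
Arguments xcoord_iter {R}.
Arguments dX_ge {R}.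


Section Main.
Variable R : realType.

Lemma pick2 (A B : R) : 0 < A -> 0 < B -> exists r, [/\ 0 < r, r <= A & r <= B].
Proof. move=> A0 B0; have [AB|BA] := leP A B; [exists A|exists B]; split => //; lra. Qed.

Lemma pick3 (A B C : R) : 0 < A -> 0 < B -> 0 < C ->
  exists r, [/\ 0 < r, r <= A, r <= B & r <= C].
Proof.
move=> A0 B0 C0; have [r [r0 rA rB]] := @pick2 A B A0 B0.
have [s [s0 sr sC]] := @pick2 r C r0 C0.
exists s; split => //; lra.
Qed.

Lemma lip_pos (h : R -> R -> R) : lipschitz01 h -> exists Lp : R, 0 < Lp /\
  forall x1 y1 x2 y2, in01 x1 -> in01 y1 -> in01 x2 -> in01 y2 ->
  `|h x1 y1 - h x2 y2| <= Lp * (`|x1 - x2| + `|y1 - y2|).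
Proof.
case=> L HL; exists (`|L| + 1); split; first by have := normr_ge0 L; lra.
move=> x1 y1 x2 y2 a b c d; apply: le_trans (HL _ _ _ _ a b c d) _.
apply: ler_wpM2r; first by apply: addr_ge0.
have := ler_norm L; lra.
Qed.

Lemma S_split h al (z : X R) n :
  \sum_(0 <= i < n.+1) (phi_of h (iter i (@Defs.shift R) z) - al) =
  \sum_(0 <= i < n) h (xcoord z i) (xcoord z i.+1) + h (xcoord z n) (xcoord z n.+1)
   - n.+1%:R * al.
Proof.
have E1 : forall i, phi_of h (iter i (@Defs.shift R) z) = h (xcoord z i) (xcoord z i.+1).
  by move=> i; rewrite /phi_of !xcoord_iter add0n add1n.
rewrite sumrB (eq_bigr _ (fun i _ => E1 i)) big_nat_recr //= sumr_const_nat subn0.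
by rewrite mulr_natl.
Qed.

Lemma fin_ineq {S1 S2 x1 x2 y1 y2 p1 p2 NH MH NA MA K d : R} :
  NH + MH + d <= S1 + x2 + (S2 + y2) -> - p1 <= x1 - x2 -> - p2 <= y1 - y2 ->
  p1 <= K -> p2 <= K -> NA <= NH -> MA <= MH -> K * 4 <= d ->
  d / 2 <= S1 + x1 - NA + (S2 + y1 - MA).
Proof. lra. Qed.

Lemma fin2 {r1 r2 s1 s2 d : R} : r1 + r2 = 0 -> s1 < r1 + d / 8 -> s2 < r2 + d / 8 ->
  0 < d -> d / 2 <= s1 + s2 -> False.
Proof. lra. Qed.

Lemma core (h : R -> R -> R) (a b c : R) (ainf binf : X R) :
  classH h -> m_h h a -> m_h h b -> a < c -> c < b -> h a a < h c c ->
  (forall i, xcoord ainf i = a) -> (forall i, xcoord binf i = b) ->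
  (peierls (phi_of h) ainf binf + peierls (phi_of h) binf ainf != 0)%E.
Proof.
move=> [hL [hH3 _]] [ai am] [bi bm] ac cb hac Ha Hb.
have [Lp [Lp0 HL]] := @lip_pos h hL.
have Hal := @alpha_le R h a ainf hL (conj ai am) Ha.
move: (ai) (bi) => /andP[a0 a1] /andP[b0 b1].
have ci : in01 c by apply/andP; split; lra.
set g := h c c - h a a.
have g0 : 0 < g by rewrite subr_gt0.
have [r [r0 rg rca rbc]] := @pick3 (g / (4 * Lp)) ((c - a) / 2) ((b - c) / 2)
  (divr_gt0 g0 (mulr_gt0 (ltr0n _ 4) Lp0)) (divr_gt0 (ltac:(lra) : 0 < c - a) (ltr0n _ 2))
  (divr_gt0 (ltac:(lra) : 0 < b - c) (ltr0n _ 2)).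
have rg' : r * (4 * Lp) <= g by rewrite -ler_pdivlMr // mulr_gt0.
set c1 := c - r; set c2 := c + r.
have c1i : i01 c1 by apply/andP; split; rewrite /c1; lra.
have c2i : i01 c2 by apply/andP; split; rewrite /c2; lra.
have c12 : c1 < c2 by rewrite /c1 /c2; lra.
have Hg : forall t, i01 t -> c1 < t < c2 -> h a a + g / 2 <= h t t.
  move=> t ti /andP[t1 t2].
  have := HL t t c c ti ti ci ci; rewrite ler_norml => /andP[H _].
  have q0 := normr_ge0 (t - c).
  have qr : `|t - c| <= r by rewrite ler_norml; apply/andP; split; rewrite /c1 /c2 in t1 t2; lra.
  rewrite /g in rg' *.
  nra.
have gam : 0 < Dm h c1 c2 c1 c2.
  by rewrite /Dm; have := hH3 c1 c2 c1 c2 c1i c2i c1i c2i c12 c12; lra.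
have [d [d0 dg dD]] := @pick2 (g / 2) (Dm h c1 c2 c1 c2) (divr_gt0 g0 (ltr0n _ 2)) gam.
have [e [e0 eca ebc ed]] := @pick3 ((c1 - a) / 2) ((b - c2) / 2) (d / (16 * Lp))
  (divr_gt0 (ltac:(rewrite /c1; lra) : 0 < c1 - a) (ltr0n _ 2))
  (divr_gt0 (ltac:(rewrite /c2; lra) : 0 < b - c2) (ltr0n _ 2))
  (divr_gt0 d0 (mulr_gt0 (ltr0n _ 16) Lp0)).
have ed' : e * (16 * Lp) <= d by rewrite -ler_pdivlMr // mulr_gt0.
set al := alpha (phi_of h).
have key : forall n m (z w : X R), Bset ainf binf n e z -> Bset binf ainf m e w ->
  d / 2 <= \sum_(0 <= i < n) (phi_of h (iter i (@Defs.shift R) z) - al) +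
           \sum_(0 <= i < m) (phi_of h (iter i (@Defs.shift R) w) - al).
  move=> n m z w [dz1 dz2] [dw1 dw2].
  have := dX_coord0 ainf z; rewrite Ha ler_norml => /andP[z0a z0b].
  have := dX_coord0 (iter n (@Defs.shift R) z) binf; rewrite xcoord_iter add0n Hb ler_norml => /andP[zna znb].
  have := dX_coord0 binf w; rewrite Hb ler_norml => /andP[w0a w0b].
  have := dX_coord0 (iter m (@Defs.shift R) w) ainf; rewrite xcoord_iter add0n Ha ler_norml => /andP[wma wmb].
  rewrite /c1 /c2 in eca ebc.
  case: n dz2 zna znb => [|n] dz2 zna znb.
    by exfalso; rewrite /= in dz2; lra.
  case: m dw2 wma wmb => [|m] dw2 wma wmb.
    by exfalso; rewrite /= in dw2; lra.
  rewrite !S_split.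
  have T := @two_paths R h hH3 (xcoord z) (xcoord w) n m (h a a) (g / 2) d c1 c2 c1i c2i c12
    (xcoord_i01 z) (xcoord_i01 w) (ltac:(rewrite /c1; lra)) (ltac:(rewrite /c2; lra))
    am Hg dg dD.
  have L1 := HL _ _ _ _ (xcoord_i01 z n) (xcoord_i01 z n.+1) (xcoord_i01 z n) (xcoord_i01 w 0).
  have L2 := HL _ _ _ _ (xcoord_i01 w m) (xcoord_i01 w m.+1) (xcoord_i01 w m) (xcoord_i01 z 0).
  rewrite subrr normr0 add0r in L1; rewrite subrr normr0 add0r in L2.
  have q1 : `|xcoord z n.+1 - xcoord w 0| <= 4 * e by rewrite ler_norml; apply/andP; split; lra.
  have q2 : `|xcoord w m.+1 - xcoord z 0| <= 4 * e by rewrite ler_norml; apply/andP; split; lra.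
  have p1 : Lp * `|xcoord z n.+1 - xcoord w 0| <= Lp * (4 * e) by rewrite ler_wpM2l // ltW.
  have p2 : Lp * `|xcoord w m.+1 - xcoord z 0| <= Lp * (4 * e) by rewrite ler_wpM2l // ltW.
  move: L1 L2; rewrite !ler_norml => /andP[L1 _] /andP[L2 _].
  have a1' : n.+1%:R * al <= n.+1%:R * h a a by rewrite ler_wpM2l // ler0n.
  have a2' : m.+1%:R * al <= m.+1%:R * h a a by rewrite ler_wpM2l // ler0n.
  have H4 : Lp * (4 * e) * 4 <= d by lra.
  exact: fin_ineq T L1 L2 p1 p2 a1' a2' H4.
apply/negP => /eqP E.
have : (peierls (phi_of h) ainf binf + peierls (phi_of h) binf ainf) \is a fin_num by rewrite E.
rewrite fin_numD => /andP[f1 f2].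
have P1 := @peierls_ge R (phi_of h) ainf binf e e0.
have P2 := @peierls_ge R (phi_of h) binf ainf e e0.
have [r1 E1] : exists r1, peierls (phi_of h) ainf binf = r1%:E.
  by exists (fine (peierls (phi_of h) ainf binf)); rewrite fineK.
have [r2 E2] : exists r2, peierls (phi_of h) binf ainf = r2%:E.
  by exists (fine (peierls (phi_of h) binf ainf)); rewrite fineK.
rewrite E1 in P1; rewrite E2 in P2; rewrite E1 E2 in E.
move: E => /eqP; rewrite -EFinD eqe => /eqP E.
have /limn_einf_lt [n] : (limn_einf (Binf (phi_of h) ainf binf e) < (r1 + d / 8)%:E)%E.
  by apply: le_lt_trans P1 _; rewrite lte_fin ltrDl divr_gt0.
move=> /ereal_inf_lt [_ [z zB <-]]; rewrite lte_fin => Sz.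
have /limn_einf_lt [m] : (limn_einf (Binf (phi_of h) binf ainf e) < (r2 + d / 8)%:E)%E.
  by apply: le_lt_trans P2 _; rewrite lte_fin ltrDl divr_gt0.
move=> /ereal_inf_lt [_ [w wB <-]]; rewrite lte_fin => Sw.
exact: fin2 E Sz Sw d0 (key n m z w zB wB).
Qed.

End Main.


Lemma find_c (R : realType) (h : R -> R -> R) a b : m_h h a -> m_h h b -> a < b ->
  ~ connected_component (m_h h) a b -> exists c, [/\ a < c, c < b & h a a < h c c].
Proof.
move=> ma mb ab ncc.
apply: contrapT => nc; apply: ncc.
have [[ai am] [bi bm]] := (ma, mb).
move: (ai) (bi) => /andP[a0 a1] /andP[b0 b1].
exists `[a, b]%classic; last by rewrite /= in_itv /= lexx (ltW ab).
split.
- by rewrite /= in_itv /= lexx (ltW ab).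
- move=> t; rewrite /= in_itv /= => /andP[ta tb].
  have ti : in01 t by apply/andP; split; lra.
  split => // s si.
  have [//|st] := leP (h t t) (h s s).
  exfalso; apply: nc; exists t; split.
  + rewrite lt_neqAle ta andbT; apply/eqP => E; subst t.
    by have := am s si; lra.
  + rewrite lt_neqAle tb andbT; apply/eqP => E; subst t.
    by have := bm s si; lra.
  + by have := am s si; lra.
- exact: segment_connected.
Qed.

Theorem theorem4p1 (R : realType) (h : R -> R -> R) (a b : R) (ainf binf : X R) :
  classH h ->
  m_h h a -> m_h h b ->
  ~ connected_component (m_h h) a b ->
  (forall i, xcoord ainf i = a) -> (forall i, xcoord binf i = b) ->
  (peierls (phi_of h) ainf binf + peierls (phi_of h) binf ainf != 0)%E.
Proof.
move=> HH ma mb ncc Ha Hb.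
have [ab|ba|eab] := ltgtP a b.
- have [c [ac cb hc]] := @find_c _ _ _ _ ma mb ab ncc.
  exact: (@core R) HH ma mb ac cb hc Ha Hb.
- have ncc' : ~ connected_component (m_h h) b a.
    by move=> /connected_component_sym.
  have [c [bc ca hc]] := @find_c _ _ _ _ mb ma ba ncc'.
  rewrite addeC; exact: (@core R) HH mb ma bc ca hc Hb Ha.
- by exfalso; subst b; apply: ncc; apply: connected_component_refl.
Qed.
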